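(* Let $N\ge1$, let $\xi_0,\dots,\xi_N$ be the LGL nodes on $[-1,1]$ with LGL weights $\omega_0,\dots,\omega_N$, $\mathcal{M}=\mathrm{diag}(\omega_0,\dots,\omega_N)$, and let $\mathcal{V}_{ij}=L_j(\xi_i)$ ($i,j=0,\dots,N$) be the Vandermonde matrix of the normalized Legendre polynomials $L_j=\sqrt{(2j+1)/2}\,P_j$. Let $\mathcal{C}=\mathrm{diag}(\sigma_0,\dots,\sigma_N)$ with $0\le\sigma_i\le1$ for all $i$ and $\sigma_N=0$, and let $\mathcal{F}=\mathcal{V}\mathcal{C}\mathcal{V}^{-1}$. Then $\mathcal{F}$ is contractive in the sense that $$\mathcal{F}^T\mathcal{M}\,\mathcal{F}-\mathcal{M}\le 0$$ (negative semidefinite), i.e. $\|\mathcal{F}\mathbf{U}\|_N\le\|\mathbf{U}\|_N$ for all $\mathbf{U}\in\mathbb{R}^{N+1}$, where $\|\mathbf{U}\|_N^2=\mathbf{U}^T\mathcal{M}\mathbf{U}$.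
   Context: The LGL nodes are $\xi_0=-1$, $\xi_N=1$ and the zeros of $P_N'$ (with $P_N$ the degree-$N$ Legendre polynomial); the LGL weights are $\omega_i=\frac{2}{N(N+1)P_N(\xi_i)^2}$. In the paper the entries $\sigma_i$ come from a filter function $\sigma:\mathbb{R}^+\to[0,1]$ (Vandeven) that vanishes for arguments $\ge1$, so the highest mode is clipped, $\sigma_N=0$. *)

(* Defs.v *)
From HB Require Import structures.
From mathcomp Require Import all_boot all_order all_algebra.
Set Implicit Arguments. Unset Strict Implicit. Unset Printing Implicit Defensive.
Import Order.TTheory GRing.Theory Num.Theory.
Local Open Scope ring_scope.

Section Legendre.
Variable R : rcfType.

(* legendre_pair n = (P_n, P_{n-1}) via Bonnet's recurrence
   (n+1) P_{n+1} = (2n+1) X P_n - n P_{n-1}, P_0 = 1, P_1 = X. *)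
Fixpoint legendre_pair (n : nat) : {poly R} * {poly R} :=
  match n with
  | 0 => (1, 0)
  | n'.+1 =>
      let (p, q) := legendre_pair n' in
      ((n'.+1%:R)^-1 *: ((n'.*2.+1)%:R *: ('X * p) - n'%:R *: q), p)
  end.

Definition legendreP (n : nat) : {poly R} := (legendre_pair n).1.

Definition normLegendre (j : nat) (x : R) : R :=
  Num.sqrt ((j.*2.+1)%:R / 2%:R) * (legendreP j).[x].

(* Since P_N' has exactly
   N-1 distinct zeros (all in (-1,1)), this determines xi uniquely. *)
Definition is_LGL_nodes (N : nat) (xi : 'I_N.+1 -> R) : Prop :=
  [/\ xi ord0 = -1, xi ord_max = 1,
      (forall i j : 'I_N.+1, (i < j)%N -> xi i < xi j) &
      (forall i : 'I_N.+1, (0 < i < N)%N -> root (legendreP N)^`() (xi i))].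

Definition LGL_weight (N : nat) (xi : 'I_N.+1 -> R) (i : 'I_N.+1) : R :=
  2%:R / ((N * N.+1)%:R * ((legendreP N).[xi i]) ^+ 2).

Definition massM (N : nat) (xi : 'I_N.+1 -> R) : 'M[R]_N.+1 :=
  \matrix_(i, j) (if i == j then LGL_weight xi i else 0).

Definition vandL (N : nat) (xi : 'I_N.+1 -> R) : 'M[R]_N.+1 :=
  \matrix_(i, j) normLegendre j (xi i).

Definition filterM (N : nat) (xi : 'I_N.+1 -> R) (sigma : 'I_N.+1 -> R)
  : 'M[R]_N.+1 :=
  vandL xi *m (\matrix_(i, j) (if i == j then sigma i else 0)) *m invmx (vandL xi).

Definition neg_semidef (n : nat) (A : 'M[R]_n) : Prop :=
  forall u : 'cV[R]_n, (u^T *m A *m u) ord0 ord0 <= 0.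

End Legendre.

(* Main.v *)
Require Import Defs.
From HB Require Import structures.
From mathcomp Require Import all_boot all_order all_algebra.
From mathcomp Require Import ring lra.
Set Implicit Arguments. Unset Strict Implicit. Unset Printing Implicit Defensive.
Import Order.TTheory GRing.Theory Num.Theory.
Local Open Scope ring_scope.

Section Aux.
Variable R : rcfType.
Definition lp n (x : R) := (legendre_pair R n).1.[x].
Definition lq n (x : R) := (legendre_pair R n).2.[x].
Definition dp n (x : R) := ((legendre_pair R n).1)^`().[x].
Definition dq n (x : R) := ((legendre_pair R n).2)^`().[x].

Lemma pair_succ n : legendre_pair R n.+1 =
  (((n.+1)%:R)^-1 *: ((n.*2.+1)%:R *: ('X * (legendre_pair R n).1)
     - n%:R *: (legendre_pair R n).2), (legendre_pair R n).1).
Proof. by rewrite /=; case: (legendre_pair R n). Qed.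

Lemma n2 n : (n.*2.+1)%:R = 2 * n%:R + 1 :> R.
Proof. by rewrite -addnn -addn1 !natrD; ring. Qed.

Lemma rec_p n x : lp n.+1 x =
  ((2 * n%:R + 1) * (x * lp n x) - n%:R * lq n x) / (n%:R + 1).
Proof.
rewrite /lp /lq pair_succ /= hornerZ hornerD hornerN !hornerZ hornerM hornerX.
by rewrite n2 -natr1 mulrC.
Qed.

Lemma rec_q n x : lq n.+1 x = lp n x.
Proof. by rewrite /lq /lp pair_succ. Qed.

Lemma rec_dp n x : dp n.+1 x =
  ((2 * n%:R + 1) * (lp n x + x * dp n x) - n%:R * dq n x) / (n%:R + 1).
Proof.
rewrite /lp /dp /dq pair_succ /= derivZ derivB !derivZ derivM derivX.
rewrite hornerZ hornerD hornerN !hornerZ hornerD !hornerM hornerX hornerC ?mul1r.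

by rewrite n2 -natr1 mulrC.
Qed.

Lemma rec_dq n x : dq n.+1 x = dp n x.
Proof. by rewrite /dq /dp pair_succ. Qed.

Lemma base0 x : [/\ lp 0 x = 1, lq 0 x = 0, dp 0 x = 0 & dq 0 x = 0].
Proof. rewrite /lp /lq /dp /dq /=. split; rewrite ?deriv0 ?hornerE //. by rewrite -polyC1 derivC hornerC. Qed.


Lemma m1_neq0 n : (n%:R + 1 : R) != 0.
Proof. by rewrite natr1 pnatr_eq0. Qed.

Lemma GE n x : (x^+2 - 1) * dp n x = n%:R * (x * lp n x - lq n x) /\
   x * dp n x - dq n x = n%:R * lp n x.
Proof.
elim: n => [|n [IG IE]].
  by case: (base0 x) => -> -> -> ->; split; ring.
rewrite rec_p rec_dp rec_q rec_dq -[n.+1%:R]natr1.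
have hb : dq n x = x * dp n x - n%:R * lp n x by rewrite -IE; ring.
rewrite hb.
have h1 := m1_neq0 n.
move: IG h1; move: (lp n x) (lq n x) (dp n x) (n%:R : R) => a b a' m IG h1.
split.
  apply/eqP; rewrite -subr_eq0; apply/eqP.

  have -> : (x ^+ 2 - 1) * (((2 * m + 1) * (a + x * a') - m * (x * a' - m * a)) / (m + 1)) -
   (m + 1) * (x * (((2 * m + 1) * (x * a) - m * b) / (m + 1)) - a) =
   x * ((x^+2 - 1) * a' - m * (x * a - b)) by field.
  by rewrite IG subrr mulr0.
apply/eqP; rewrite -subr_eq0; apply/eqP.
have -> : x * (((2 * m + 1) * (a + x * a') - m * (x * a' - m * a)) / (m + 1)) - a' -
   (m + 1) * (((2 * m + 1) * (x * a) - m * b) / (m + 1)) =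
   ((x^+2 - 1) * a' - m * (x * a - b)) by field.
by rewrite IG subrr.
Qed.

Lemma CD2 n x y : (x - y) * \sum_(m < n) ((2 * m%:R + 1) * (lp m x * lp m y)) =
  n%:R * (lp n x * lq n y - lq n x * lp n y).
Proof.
elim: n => [|n IH].
  by rewrite big_ord0 mul0r mulr0.
rewrite big_ord_recr /= mulrDr IH rec_p rec_p !rec_q -[n.+1%:R]natr1.
have h1 := m1_neq0 n.
move: h1; move: (lp n x) (lq n x) (lp n y) (lq n y) (n%:R : R) => a b c d m h1.
by field.
Qed.

Lemma CDc n x : \sum_(m < n) ((2 * m%:R + 1) * (lp m x ^+ 2)) =
  n%:R * (dp n x * lq n x - dq n x * lp n x).
Proof.
elim: n => [|n IH].
  by rewrite big_ord0 mul0r.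
rewrite big_ord_recr /= IH rec_p rec_dp !rec_q !rec_dq -[n.+1%:R]natr1.
have h1 := m1_neq0 n.
move: h1; move: (lp n x) (lq n x) (dp n x) (dq n x) (n%:R : R) => a b c d m h1.
by field.
Qed.


Lemma quad_diag n (w : 'cV[R]_n) (e : 'rV[R]_n) :
  (w^T *m diag_mx e *m w) 0 0 = \sum_j w j 0 ^+ 2 * e 0 j.
Proof.
rewrite mul_mx_diag mxE; apply: eq_bigr => j _; rewrite !mxE; ring.
Qed.

Lemma final n (V M : 'M[R]_n) (c k : 'rV[R]_n) : V \in unitmx ->
  V^T *m M *m V = diag_mx k -> (forall j, 0 <= k 0 j) ->
  (forall j, c 0 j ^+ 2 <= 1) -> forall u : 'cV_n,
  (u^T *m ((V *m diag_mx c *m invmx V)^T *m M *m (V *m diag_mx c *m invmx V) - M)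
     *m u) 0 0 <= 0.
Proof.
move=> Vu hK hk hc u.
set w := invmx V *m u.
have hu : u = V *m w by rewrite /w mulKVmx.
have hF : V *m diag_mx c *m invmx V *m u = V *m (diag_mx c *m w).
  by rewrite hu mulmxA mulmxKV // mulmxA.
clearbody w.
rewrite mulmxBr mulmxBl.
have -> : forall A B : 'M[R]_1, (A - B) 0 0 = A 0 0 - B 0 0 by move=> A B; rewrite !mxE.
have -> : u^T *m ((V *m diag_mx c *m invmx V)^T *m M *m (V *m diag_mx c *m invmx V)) *m u
  = w^T *m (diag_mx c *m diag_mx k *m diag_mx c) *m w.
  have -> : u^T *m ((V *m diag_mx c *m invmx V)^T *m M *m (V *m diag_mx c *m invmx V)) *m u
    = (V *m diag_mx c *m invmx V *m u)^T *m M *m (V *m diag_mx c *m invmx V *m u).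
    by rewrite !trmx_mul !mulmxA.
  rewrite hF.
  have -> : (V *m (diag_mx c *m w))^T *m M *m (V *m (diag_mx c *m w)) =
    (diag_mx c *m w)^T *m (V^T *m M *m V) *m (diag_mx c *m w).
    by rewrite !trmx_mul !mulmxA.
  by rewrite hK trmx_mul tr_diag_mx !mulmxA.
have -> : u^T *m M *m u = w^T *m diag_mx k *m w.
  by rewrite hu -hK !trmx_mul !mulmxA.
rewrite !mulmx_diag !quad_diag -sumrB.
apply: sumr_le0 => j _; rewrite !mxE.
have := hk j; have := hc j; move: (k 0 j) (c 0 j) (w j 0) => a b d h1 h2.
have -> : d ^+ 2 * (b * a * b) - d ^+ 2 * a = - (d ^+ 2 * a * (1 - b ^+ 2)) by ring.
rewrite oppr_le0; apply: mulr_ge0; first by apply: mulr_ge0 => //; exact: sqr_ge0.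
by rewrite subr_ge0.
Qed.

Definition dd (N m : nat) : R := if (m < N)%N then 2 * m%:R + 1 else N%:R.

Lemma dd_gt0 N m : (1 <= N)%N -> 0 < dd N m.
Proof.
move=> hN; rewrite /dd; case: ifP => _.
  by apply: ltr_pwDr; [rewrite ltr01 | apply: mulr_ge0 => //; rewrite ler0n].
by rewrite ltr0n.
Qed.

Lemma node_sq N (xi : 'I_N.+1 -> R) (hN : (1 <= N)%N) (hxi : is_LGL_nodes xi) i :
  (xi i ^+ 2 - 1) * dp N (xi i) = 0.
Proof.
case: hxi => h0 hM _ hr.
have [->|ne0] := eqVneq i ord0; first by rewrite h0 sqrrN expr1n subrr mul0r.
have [->|neM] := eqVneq i ord_max; first by rewrite hM expr1n subrr mul0r.
have hi : (0 < i < N)%N.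
  apply/andP; split.
    rewrite lt0n; apply: contra ne0 => /eqP h; apply/eqP/val_inj => /=; exact: h.
  have := ltn_ord i; rewrite ltnS leq_eqVlt => /orP [/eqP h|//].
  by move: neM; rewrite -(inj_eq val_inj) /= h eqxx.
by have := rootP (hr i hi); rewrite /dp /legendreP => ->; rewrite mulr0.
Qed.

Lemma node_q N (xi : 'I_N.+1 -> R) (hN : (1 <= N)%N) (hxi : is_LGL_nodes xi) i :
  lq N (xi i) = xi i * lp N (xi i).
Proof.
have h := node_sq hN hxi i; case: (GE N (xi i)) => hG _.
move: h; rewrite hG => /eqP; rewrite mulf_eq0 pnatr_eq0 eqn0Ngt hN /= subr_eq0.
by move/eqP.
Qed.

Lemma lamE N (xi : 'I_N.+1 -> R) (hN : (1 <= N)%N) (hxi : is_LGL_nodes xi) i :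
  \sum_(m < N.+1) dd N m * lp m (xi i) ^+ 2 = N%:R * N.+1%:R * lp N (xi i) ^+ 2.
Proof.
rewrite big_ord_recr /=.
rewrite (eq_bigr (fun m : 'I_N => (2 * m%:R + 1) * lp m (xi i) ^+ 2)); last first.
  by move=> m _; rewrite /dd /= ltn_ord.
rewrite CDc node_q // /dd ltnn.
case: (GE N (xi i)) => _ hE.
have -> : dq N (xi i) = xi i * dp N (xi i) - N%:R * lp N (xi i) by rewrite -hE; ring.
rewrite -natr1; ring.
Qed.

Lemma orth N (xi : 'I_N.+1 -> R) (hN : (1 <= N)%N) (hxi : is_LGL_nodes xi) i l :
  i != l -> \sum_(m < N.+1) dd N m * (lp m (xi i) * lp m (xi l)) = 0.
Proof.
move=> il.
have hne : xi i - xi l != 0.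
  rewrite subr_eq0; case: hxi => _ _ hmon _.
  move: il; rewrite neq_ltn => /orP [h|h].
    by rewrite lt_eqF // hmon.
  by rewrite gt_eqF // hmon.
rewrite big_ord_recr /=.
rewrite (eq_bigr (fun m : 'I_N => (2 * m%:R + 1) * (lp m (xi i) * lp m (xi l)))); last first.
  by move=> m _; rewrite /dd /= ltn_ord.
have h := CD2 N (xi i) (xi l).
rewrite !node_q // in h.
apply: (mulfI hne); rewrite mulr0 mulrDr h /dd ltnn; ring.
Qed.
End Aux.

Unset Implicit Arguments.
Theorem proposition2 (R : rcfType) (N : nat) (hN : (1 <= N)%N)
  (xi : 'I_N.+1 -> R) (hxi : is_LGL_nodes xi)
  (sigma : 'I_N.+1 -> R)
  (hsig : forall i, 0 <= sigma i <= 1) (hsigN : sigma ord_max = 0) :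
  neg_semidef ((filterM xi sigma)^T *m massM xi *m filterM xi sigma - massM xi).
Proof.
pose lam i := N%:R * N.+1%:R * lp N (xi i) ^+ 2.
have lampos : forall i, 0 < lam i.
  move=> i; rewrite /lam -(lamE hN hxi) big_ord_recl.
  apply: (@lt_le_trans _ _ (dd R N 0 * lp 0 (xi i) ^+ 2)).
    by case: (base0 (xi i)) => -> _ _ _; rewrite expr1n mulr1 dd_gt0.
  rewrite lerDl; apply: sumr_ge0 => m _; apply: mulr_ge0; last exact: sqr_ge0.
  exact/ltW/dd_gt0.
pose P : 'M[R]_N.+1 := \matrix_(i, m) lp m (xi i).
pose Dv : 'rV[R]_N.+1 := \row_m dd R N m.
pose Lv : 'rV[R]_N.+1 := \row_i lam i.
have PD : P *m diag_mx Dv *m P^T = diag_mx Lv.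
  apply/matrixP => i l; rewrite mul_mx_diag !mxE.
  have [<-|il] := eqVneq i l.
    rewrite mulr1n /lam -(lamE hN hxi); apply: eq_bigr => m _; rewrite !mxE; ring.
  rewrite -[lam i *+ false]/(lam i *+ 0) mulr0n -[RHS](orth hN hxi il); apply: eq_bigr => m _; rewrite !mxE; ring.
have Lunit : diag_mx Lv \in unitmx.
  rewrite unitmxE det_diag unitfE; apply: lt0r_neq0; apply: prodr_gt0 => i _.
  by rewrite mxE.
have PTunit : P^T \in unitmx.
  by move: Lunit; rewrite -PD unitmx_mul => /andP [].
have Punit : P \in unitmx by rewrite -unitmx_tr.
pose Wv : 'rV[R]_N.+1 := \row_i (2 / lam i).
have hM : massM xi = diag_mx Wv.
  apply/matrixP => i j; rewrite !mxE.
  case ij: (i == j); last by rewrite mulr0n.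
  by rewrite mulr1n /LGL_weight /lam /lp /legendreP natrM.
pose Dinv : 'rV[R]_N.+1 := \row_m (dd R N m)^-1.
have DDinv : diag_mx Dv *m diag_mx Dinv = 1%:M.
  rewrite mulmx_diag -diag_const_mx; congr diag_mx; apply/rowP => m; rewrite !mxE.
  by rewrite mulfV // lt0r_neq0 // dd_gt0.
have MP : P^T *m massM xi *m P = 2 *: diag_mx Dinv.
  set X := P^T *m massM xi *m P.
  have h1 : X *m diag_mx Dv *m P^T = 2%:M *m P^T.
    rewrite /X -!mulmxA [P *m (_ *m _)]mulmxA PD hM mulmx_diag.
    have -> : diag_mx (\row_j (Wv 0 j * Lv 0 j)) = (2 : R)%:M.
      rewrite -diag_const_mx; congr diag_mx; apply/rowP => j; rewrite !mxE.
      by rewrite mulfVK // lt0r_neq0.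
    by rewrite scalar_mxC.
  have h2 : X *m diag_mx Dv = 2%:M.
    by have := congr1 (mulmx^~ (invmx P^T)) h1; rewrite /= !mulmxK.
  by rewrite -[X]mulmx1 -DDinv mulmxA h2 mul_scalar_mx.
pose Sv : 'rV[R]_N.+1 := \row_m Num.sqrt ((m.*2.+1)%:R / 2%:R).
have Spos : forall m, 0 < Sv 0 m.
  move=> m; rewrite mxE sqrtr_gt0 divr_gt0 // ltr0n //.
have hV : vandL xi = P *m diag_mx Sv.
  by apply/matrixP => i j; rewrite mul_mx_diag !mxE /normLegendre /lp /legendreP mulrC.
have Vunit : vandL xi \in unitmx.
  rewrite hV unitmx_mul Punit /= unitmxE det_diag unitfE; apply: lt0r_neq0.
  by apply: prodr_gt0 => i _.
pose Cv : 'rV[R]_N.+1 := \row_i sigma i.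
have hF : filterM xi sigma = vandL xi *m diag_mx Cv *m invmx (vandL xi).
  rewrite /filterM; congr (_ *m _ *m _); apply/matrixP => i j; rewrite !mxE.
  by case: (i == j); [rewrite mulr1n | rewrite mulr0n].
pose Kv : 'rV[R]_N.+1 := \row_j (Sv 0 j * (2 * Dinv 0 j) * Sv 0 j).
have hK : (vandL xi)^T *m massM xi *m vandL xi = diag_mx Kv.
  rewrite hV trmx_mul tr_diag_mx.
  have -> : diag_mx Sv *m P^T *m massM xi *m (P *m diag_mx Sv) =
    diag_mx Sv *m (P^T *m massM xi *m P) *m diag_mx Sv by rewrite !mulmxA.
  have -> : P^T *m massM xi *m P = diag_mx (\row_j (2 * Dinv 0 j)).
    rewrite MP; apply/matrixP => a b; rewrite !mxE.
    by case: (a == b); rewrite ?mulr1n ?mulr0n ?mulr0.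
  rewrite !mulmx_diag; congr diag_mx; apply/rowP => j; rewrite !mxE; ring.
move=> u; rewrite hF; apply: (final Vunit hK).
- move=> j; rewrite [Kv 0 j]mxE; apply: mulr_ge0; last exact/ltW.
  apply: mulr_ge0; first exact/ltW.
  by apply: mulr_ge0 => //; rewrite mxE invr_ge0; apply/ltW/dd_gt0.
- move=> j; rewrite mxE; case/andP: (hsig j) => h0 h1; nra.
Qed.
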